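(* For every incentive compatible and individually rational mechanism $(f,p)$ there exists another incentive compatible and individually rational mechanism $(f',p')$ such that $\Pi(f',p')=\Pi(f,p)$ and $f'_1(v,k)=k\,f'_2(v,k)$ for all $(v,k)\in V\times K$.
   Context: An agent has private type $(v,k)\in V\times K$, $V=[0,1]$, $K=(0,1]$, and from an outcome $(a_1,a_2,t)$ with $a_1,a_2\in[0,1]$ (quantities of two divisible goods) and $t\in\mathbb{R}$ (payment by the agent) gets utility $U_{(v,k)}(a_1,a_2,t)=v\min\{a_1/k,a_2\}-t$. A mechanism is a pair $(f,p)$ with $f=(f_1,f_2):V\times K\to[0,1]^2$, $p:V\times K\to\mathbb{R}$. It is incentive compatible if $U_{(v,k)}(f(v,k),p(v,k))\ge U_{(v,k)}(f(v',k'),p(v',k'))$ for all types $(v,k),(v',k')$, and individually rational if $U_{(v,k)}(f(v,k),p(v,k))\ge0$ for all $(v,k)$. The type is distributed according to a joint distribution $G$ on $V\times K$ with strictly positive density, and the expected revenue of $(f,p)$ is $\Pi(f,p)=\int_{V\times K}p(v,k)\,dG(v,k)$. *)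

(* Defs.v *)
From HB Require Import structures.
From mathcomp Require Import all_boot all_order all_algebra.
From mathcomp Require Import all_classical all_reals all_analysis.
Set Implicit Arguments. Unset Strict Implicit. Unset Printing Implicit Defensive.
Import Order.TTheory GRing.Theory Num.Theory.
Local Open Scope classical_set_scope.
Local Open Scope ring_scope.

Section Model.
Variable R : realType.

Definition VK : set (R * R) := [set x | (0 <= x.1 <= 1) /\ (0 < x.2 <= 1)].

Definition util (v k a1 a2 t : R) : R := v * Num.min (a1 / k) a2 - t.

Definition allocation_ok (f1 f2 : R -> R -> R) : Prop :=
  forall v k, VK (v, k) -> (0 <= f1 v k <= 1) /\ (0 <= f2 v k <= 1).

Definition IC (f1 f2 p : R -> R -> R) : Prop :=
  forall v k v' k', VK (v, k) -> VK (v', k') ->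
    util v k (f1 v' k') (f2 v' k') (p v' k') <= util v k (f1 v k) (f2 v k) (p v k).

Definition IR (f1 f2 p : R -> R -> R) : Prop :=
  forall v k, VK (v, k) -> 0 <= util v k (f1 v k) (f2 v k) (p v k).

Definition leb2 := ((@lebesgue_measure R) \x (@lebesgue_measure R))%E.

(* expected revenue int p dG, where G has density g w.r.t. Lebesgue on V x K *)
Definition revenue (g : R * R -> R) (p : R -> R -> R) : \bar R :=
  (\int[leb2]_(x in VK) ((p x.1 x.2 * g x)%:E))%E.

End Model.

(* Main.v *)
Require Import Defs.
From mathcomp Require Import all_boot all_order all_algebra.
From mathcomp Require Import all_classical all_reals all_analysis.
Import Order.TTheory GRing.Theory Num.Theory.
Local Open Scope classical_set_scope.
Local Open Scope ring_scope.

Theorem proposition2 (R : realType) (g : R * R -> R)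
  (g_meas : measurable_fun (@VK R) g)
  (g_pos : forall x, @VK R x -> 0 < g x)
  (g_prob : (\int[@leb2 R]_(x in @VK R) (g x)%:E)%E = 1%E)
  (f1 f2 p : R -> R -> R) :
  allocation_ok f1 f2 -> IC f1 f2 p -> IR f1 f2 p ->
  exists f1' f2' p' : R -> R -> R,
    [/\ allocation_ok f1' f2', IC f1' f2' p', IR f1' f2' p',
        revenue g p' = revenue g p &
        forall v k, @VK R (v, k) -> f1' v k = k * f2' v k].
Proof.
move=> Hal Hic Hir.
pose m v k := Num.min (f1 v k / k) (f2 v k).
have key : forall v k, VK (v, k) ->
    util v k (k * m v k) (m v k) (p v k) = util v k (f1 v k) (f2 v k) (p v k).
  move=> v k [_ /= /andP[k0 _]].
  by rewrite /util [k * _]mulrC mulfK ?gt_eqF // minxx.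
have mb : forall v k, VK (v, k) -> 0 <= m v k <= 1.
  move=> v k Hvk; have := Hal v k Hvk; case: Hvk => _ /= /andP[k0 _].
  move=> [/andP[a0 _] /andP[b0 b1]]; apply/andP; split.
    by rewrite le_min b0 divr_ge0 // ltW.
  by rewrite ge_min b1 orbT.
exists (fun v k => k * m v k), m, p; split.
- move=> v k Hvk; split; last exact: mb.
  have /andP[m0 m1] := mb v k Hvk; case: Hvk => _ /= /andP[k0 k1].
  rewrite /=; apply/andP; split; first exact: (mulr_ge0 (ltW k0) m0).
  exact: (mulr_ile1 (ltW k0) m0 k1 m1).
- move=> v k v' k' Hvk Hvk'; rewrite key //.
  apply: le_trans (Hic v k v' k' Hvk Hvk').
  rewrite /util lerD2r; case: Hvk => /= /andP[v0 _] /andP[k0 _].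
  apply: ler_wpM2l => //; apply: le_min2; last by rewrite ge_min lexx orbT.
  rewrite ler_pM2r ?invr_gt0 //.
  case: Hvk' => _ /= /andP[k'0 _].
  by rewrite mulrC -ler_pdivlMr // ge_min lexx.
- by move=> v k Hvk; rewrite key //; apply: Hir.
- by [].
- by [].
Qed.
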